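(* (1) If $0<t<7$, $t\ne1$, $0<u<\mu_A(t)$ and $u\ne\frac{3(t-1)^2(t+2)}{2t+1}$, then $\mathfrak{e}^A_{t,u}(a^2,b^2,c^2)\notin\Sigma_{3,10}$. (2) If $t>2$, $\mu_B(t)<u<1$ and $b^B_1(t,\omega(u))\ne0$, where $b^B_1(t,w)=(2t+1)w-t(t-4)$, then $\mathfrak{e}^B_{t,u}(a^2,b^2,c^2)\notin\Sigma_{3,10}$.
   Context: Let $a,b,c$ be variables. For nonnegative integers $m,n$ put $S_{m,n}=a^mb^n+b^mc^n+c^ma^n$, $S_n=S_{n,0}=a^n+b^n+c^n$, $T_{m,n}=S_{m,n}+S_{n,m}$, $U=abc$ (so $S_{1,1}=ab+bc+ca$). Put $s_0=S_5-US_{1,1}$, $s_1=T_{4,1}-2US_{1,1}$, $s_2=T_{3,2}-2US_{1,1}$, $s_3=US_2-US_{1,1}$, $s_4=US_{1,1}$. $\Sigma_{3,10}$ denotes the cone of real ternary forms of degree 10 that are sums of squares of real ternary quintic forms. Auxiliary functions: $\mu_L(t)=9(t-1)^2$, $\mu_H(t)=(t+2)(7-t)$, $\mu_A(t)=\min\{\mu_L(t),\mu_H(t)\}$, $\mu_R(t)=2-t^2+t\sqrt{(t-1)(t+2)}$, $\mu_B(t)=\tfrac12\big(\mu_R(t)-\sqrt{\mu_R(t)^2-4}\big)$ (for $t\ge2$), $\omega(u)=u+\frac1u-2$. Family A: for $u>0$, $\mathfrak{e}^A_{t,u}=s_0+\sum_{i=1}^4p^A_i(t,u)s_i$ where $p^A_1=\dfrac{u^2-(t+2)(5t^2+t+9)u+9(t-1)^2(t+2)^2}{(5t+1)(t+2)u}$,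 $p^A_2=\dfrac{-t^2u^3+(t-1)(7t^3-t^2+11t+1)u^2+(t+2)(17t^5-25t^4+199t^3-59t^2+76t+8)u+9(t-1)^4(t+2)^2(t^2-12t-1)}{(5t+1)^3(t+2)u}$, $p^A_3=\dfrac{(2t^3+4t^2+5t+1)u^3-2(t+2)(7t^4+42t^3+37t^2+48t+10)u^2+(t+2)^2(91t^5+125t^4+682t^3+182t^2+523t+125)u-18(t-1)^2(t+2)^3(t^4+36t^3+34t^2+60t+13)}{(t+2)^2(5t+1)^3u}$, $p^A_4=\dfrac{(t-1)^3(6t^2+6t-12+u)^3}{(t+2)^2(5t+1)^3u}$. Family B: with $p^B_1(t,w)=-2w-3$, $p^B_2(t,w)=w^2+2w+2$, $p^B_3(t,w)=-\frac{2t^3+4t^2+5t+1}{t^2(t+2)}w^2+\frac{2(4t^2+5t+3)}{t+2}w-\frac{3t^3-7t^2-12t-8}{t+2}$, $p^B_4(t,w)=\frac{(t-1)^3(-w^2-2t^2w+t^2(t-2))}{t^2(t+2)}$, put $\mathfrak{e}^B_{t,u}=s_0+\sum_{i=1}^4p^B_i(t,\omega(u))s_i$. *)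

(* Defs.v *)
From Stdlib Require Import Reals List.
Open Scope R_scope.

Definition Smn (m n : nat) (a b c : R) : R := a^m*b^n + b^m*c^n + c^m*a^n.
Definition Sn (n : nat) (a b c : R) : R := Smn n 0 a b c.
Definition Tmn (m n : nat) (a b c : R) : R := Smn m n a b c + Smn n m a b c.
Definition Uabc (a b c : R) : R := a*b*c.

Definition s0 (a b c : R) : R := Sn 5 a b c - Uabc a b c * Smn 1 1 a b c.
Definition s1 (a b c : R) : R := Tmn 4 1 a b c - 2 * Uabc a b c * Smn 1 1 a b c.
Definition s2 (a b c : R) : R := Tmn 3 2 a b c - 2 * Uabc a b c * Smn 1 1 a b c.
Definition s3 (a b c : R) : R := Uabc a b c * Sn 2 a b c - Uabc a b c * Smn 1 1 a b c.
Definition s4 (a b c : R) : R := Uabc a b c * Smn 1 1 a b c.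

Definition muL (t : R) : R := 9*(t-1)^2.
Definition muH (t : R) : R := (t+2)*(7-t).
Definition muA (t : R) : R := Rmin (muL t) (muH t).
Definition muR (t : R) : R := 2 - t^2 + t * sqrt ((t-1)*(t+2)).
Definition muB (t : R) : R := (muR t - sqrt ((muR t)^2 - 4)) / 2.
Definition omega (u : R) : R := u + 1/u - 2.

Definition pA1 (t u : R) : R :=
  (u^2 - (t+2)*(5*t^2+t+9)*u + 9*(t-1)^2*(t+2)^2) / ((5*t+1)*(t+2)*u).
Definition pA2 (t u : R) : R :=
  (- t^2*u^3 + (t-1)*(7*t^3 - t^2 + 11*t + 1)*u^2
   + (t+2)*(17*t^5 - 25*t^4 + 199*t^3 - 59*t^2 + 76*t + 8)*u
   + 9*(t-1)^4*(t+2)^2*(t^2 - 12*t - 1)) / ((5*t+1)^3*(t+2)*u).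
Definition pA3 (t u : R) : R :=
  ((2*t^3 + 4*t^2 + 5*t + 1)*u^3
   - 2*(t+2)*(7*t^4 + 42*t^3 + 37*t^2 + 48*t + 10)*u^2
   + (t+2)^2*(91*t^5 + 125*t^4 + 682*t^3 + 182*t^2 + 523*t + 125)*u
   - 18*(t-1)^2*(t+2)^3*(t^4 + 36*t^3 + 34*t^2 + 60*t + 13))
  / ((t+2)^2*(5*t+1)^3*u).
Definition pA4 (t u : R) : R :=
  ((t-1)^3*(6*t^2 + 6*t - 12 + u)^3) / ((t+2)^2*(5*t+1)^3*u).

Definition eA (t u : R) (a b c : R) : R :=
  s0 a b c + pA1 t u * s1 a b c + pA2 t u * s2 a b c
  + pA3 t u * s3 a b c + pA4 t u * s4 a b c.

Definition pB1 (t w : R) : R := -2*w - 3.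
Definition pB2 (t w : R) : R := w^2 + 2*w + 2.
Definition pB3 (t w : R) : R :=
  - (2*t^3 + 4*t^2 + 5*t + 1) / (t^2*(t+2)) * w^2
  + 2*(4*t^2 + 5*t + 3) / (t+2) * w
  - (3*t^3 - 7*t^2 - 12*t - 8) / (t+2).
Definition pB4 (t w : R) : R :=
  ((t-1)^3 * (- w^2 - 2*t^2*w + t^2*(t-2))) / (t^2*(t+2)).

Definition eB (t u : R) (a b c : R) : R :=
  let w := omega u in
  s0 a b c + pB1 t w * s1 a b c + pB2 t w * s2 a b c
  + pB3 t w * s3 a b c + pB4 t w * s4 a b c.

Definition bB1 (t w : R) : R := (2*t+1)*w - t*(t-4).

Definition quintic (q : nat -> nat -> R) (a b c : R) : R :=
  sum_f_R0 (fun i =>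
    sum_f_R0 (fun j => q i j * a^i * b^j * c^(5 - i - j)) (5 - i)) 5.

(* Sigma_{3,10}: ternary forms (of degree 10) that are sums of squares of
   real ternary quintic forms.  Equality of real polynomials is equality
   as functions on R^3. *)
Definition in_Sigma_3_10 (f : R -> R -> R -> R) : Prop :=
  exists qs : list (nat -> nat -> R),
    forall a b c : R,
      f a b c = fold_right (fun q acc => (quintic q a b c)^2 + acc) 0 qs.

(* Main.v *)
Require Import Defs.
From Stdlib Require Import Reals Lra Lia Psatz List.
Open Scope R_scope.

Definition g1 (q : nat -> nat -> R) x y z :=
  q 5%nat 0%nat * x^2 + q 3%nat 2%nat * x*y + q 3%nat 0%nat * x*z
  + q 1%nat 4%nat * y^2 + q 1%nat 2%nat * y*z + q 1%nat 0%nat * z^2.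
Definition g2 (q : nat -> nat -> R) x y z :=
  q 0%nat 5%nat * y^2 + q 2%nat 3%nat * x*y + q 0%nat 3%nat * y*z
  + q 4%nat 1%nat * x^2 + q 0%nat 1%nat * z^2 + q 2%nat 1%nat * x*z.
Definition g3 (q : nat -> nat -> R) x y z :=
  q 0%nat 0%nat * z^2 + q 2%nat 0%nat * x*z + q 0%nat 2%nat * y*z
  + q 4%nat 0%nat * x^2 + q 0%nat 4%nat * y^2 + q 2%nat 2%nat * x*y.
Definition hh (q : nat -> nat -> R) x y z :=
  q 3%nat 1%nat * x + q 1%nat 3%nat * y + q 1%nat 1%nat * z.

Lemma decomp q a b c : quintic q a b c =
  a * g1 q (a^2) (b^2) (c^2) + b * g2 q (a^2) (b^2) (c^2)
  + c * g3 q (a^2) (b^2) (c^2) + a*b*c * hh q (a^2) (b^2) (c^2).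
Proof. unfold quintic, g1, g2, g3, hh; simpl. ring. Qed.

Lemma comps q a b c :
  (forall a' b' c', a'^2 = a^2 -> b'^2 = b^2 -> c'^2 = c^2 -> quintic q a' b' c' = 0) ->
  a * g1 q (a^2) (b^2) (c^2) = 0 /\ b * g2 q (a^2) (b^2) (c^2) = 0 /\
  c * g3 q (a^2) (b^2) (c^2) = 0 /\ a*b*c * hh q (a^2) (b^2) (c^2) = 0.
Proof.
  intros H.
  assert (E: forall sa sb sc, sa^2 = 1 -> sb^2 = 1 -> sc^2 = 1 ->
     sa * a * g1 q (a^2) (b^2) (c^2) + sb * b * g2 q (a^2) (b^2) (c^2)
     + sc * c * g3 q (a^2) (b^2) (c^2) + sa*sb*sc*(a*b*c) * hh q (a^2) (b^2) (c^2) = 0).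
  { intros sa sb sc Ha Hb Hc.
    assert (Q := H (sa*a) (sb*b) (sc*c)).
    assert (Fa: (sa*a)^2 = a^2) by (replace ((sa*a)^2) with (sa^2*a^2) by ring; rewrite Ha; ring).
    assert (Fb: (sb*b)^2 = b^2) by (replace ((sb*b)^2) with (sb^2*b^2) by ring; rewrite Hb; ring).
    assert (Fc: (sc*c)^2 = c^2) by (replace ((sc*c)^2) with (sc^2*c^2) by ring; rewrite Hc; ring).
    specialize (Q Fa Fb Fc). rewrite decomp, Fa, Fb, Fc in Q.
    rewrite <- Q; ring. }
  set (A := a * g1 q (a^2) (b^2) (c^2)) in *.
  set (B := b * g2 q (a^2) (b^2) (c^2)) in *.
  set (C := c * g3 q (a^2) (b^2) (c^2)) in *.
  set (D := a*b*c * hh q (a^2) (b^2) (c^2)) in *.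
  assert (p : 1^2 = 1) by ring. assert (m : (-1)^2 = 1) by ring.
  pose proof (E 1 1 1 p p p). pose proof (E (-1) 1 1 m p p).
  pose proof (E 1 (-1) 1 p m p). pose proof (E 1 1 (-1) p p m).
  unfold A, B, C, D in *.
  repeat split; nra.
Qed.

Definition SQ (qs : list (nat -> nat -> R)) a b c :=
  fold_right (fun q acc => (quintic q a b c)^2 + acc) 0 qs.

Lemma SQ_nonneg qs a b c : 0 <= SQ qs a b c.
Proof. unfold SQ; induction qs; cbn [fold_right]; [lra|]. nra. Qed.

Lemma SQ_zero qs a b c : SQ qs a b c = 0 -> forall q, In q qs -> quintic q a b c = 0.
Proof.
  induction qs as [|q0 qs IH]; unfold SQ in *; cbn [fold_right] in *; [intros _ q []|].
  intros H q [<-|Hin].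
  - pose proof (SQ_nonneg qs a b c). unfold SQ in *. nra.
  - apply IH; auto. pose proof (SQ_nonneg qs a b c). unfold SQ in *. nra.
Qed.

Lemma SQ_zero' qs a b c : (forall q, In q qs -> quintic q a b c = 0) -> SQ qs a b c = 0.
Proof.
  induction qs as [|q0 qs IH]; unfold SQ in *; cbn [fold_right] in *; [intros; reflexivity|].
  intros H. rewrite (H q0 (or_introl eq_refl)). rewrite IH; [ring|].
  intros q Hq; apply H; right; exact Hq.
Qed.

Lemma point_zero (Fe : R -> R -> R -> R) qs
  (HF : forall a b c, Fe (a^2) (b^2) (c^2) = SQ qs a b c) x y z q :
  In q qs -> 0 <= x -> 0 <= y -> 0 <= z -> Fe x y z = 0 ->
  (0 < x -> g1 q x y z = 0) /\ (0 < y -> g2 q x y z = 0) /\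
  (0 < z -> g3 q x y z = 0) /\ (0 < x -> 0 < y -> 0 < z -> hh q x y z = 0).
Proof.
  intros Hin Hx Hy Hz HZ.
  assert (Ex : (sqrt x)^2 = x) by (rewrite <- Rsqr_pow2; apply Rsqr_sqrt; auto).
  assert (Ey : (sqrt y)^2 = y) by (rewrite <- Rsqr_pow2; apply Rsqr_sqrt; auto).
  assert (Ez : (sqrt z)^2 = z) by (rewrite <- Rsqr_pow2; apply Rsqr_sqrt; auto).
  destruct (comps q (sqrt x) (sqrt y) (sqrt z)) as (H1 & H2 & H3 & H4).
  { intros a' b' c' Ha Hb Hc. apply (SQ_zero qs a' b' c'); auto.
    rewrite <- HF, Ha, Hb, Hc, Ex, Ey, Ez. exact HZ. }
  rewrite Ex, Ey, Ez in *.
  repeat split; intros.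
  - apply Rmult_integral in H1; destruct H1 as [H1|H1]; auto.
    pose proof (sqrt_lt_R0 x H); lra.
  - apply Rmult_integral in H2; destruct H2 as [H2|H2]; auto.
    pose proof (sqrt_lt_R0 y H); lra.
  - apply Rmult_integral in H3; destruct H3 as [H3|H3]; auto.
    pose proof (sqrt_lt_R0 z H); lra.
  - pose proof (sqrt_lt_R0 x H). pose proof (sqrt_lt_R0 y H0). pose proof (sqrt_lt_R0 z H5).
    apply Rmult_integral in H4; destruct H4 as [H4|H4]; auto.
    assert (0 < sqrt x * sqrt y * sqrt z) by (apply Rmult_lt_0_compat; auto; apply Rmult_lt_0_compat; auto).
    lra.
Qed.

Definition conic c1 c2 c3 c4 c5 c6 x y z :=
  c1*x^2+c2*y^2+c3*z^2+c4*x*y+c5*y*z+c6*z*x.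

Lemma g1_conic q x y z : g1 q x y z =
  conic (q 5%nat 0%nat) (q 1%nat 4%nat) (q 1%nat 0%nat) (q 3%nat 2%nat) (q 1%nat 2%nat) (q 3%nat 0%nat) x y z.
Proof. unfold g1, conic; ring. Qed.
Lemma g2_conic q x y z : g2 q x y z =
  conic (q 4%nat 1%nat) (q 0%nat 5%nat) (q 0%nat 1%nat) (q 2%nat 3%nat) (q 0%nat 3%nat) (q 2%nat 1%nat) x y z.
Proof. unfold g2, conic; ring. Qed.
Lemma g3_conic q x y z : g3 q x y z =
  conic (q 4%nat 0%nat) (q 0%nat 4%nat) (q 0%nat 0%nat) (q 2%nat 2%nat) (q 0%nat 2%nat) (q 2%nat 0%nat) x y z.
Proof. unfold g3, conic; ring. Qed.

Lemma conicA c1 c2 c3 c4 c5 c6 t r :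
  (t-r)*(2*t*r+t+r-4) <> 0 ->
  conic c1 c2 c3 c4 c5 c6 t 1 1 = 0 -> conic c1 c2 c3 c4 c5 c6 1 t 1 = 0 ->
  conic c1 c2 c3 c4 c5 c6 1 1 t = 0 -> conic c1 c2 c3 c4 c5 c6 r 1 1 = 0 ->
  conic c1 c2 c3 c4 c5 c6 1 r 1 = 0 -> conic c1 c2 c3 c4 c5 c6 1 1 r = 0 ->
  conic c1 c2 c3 c4 c5 c6 1 1 1 = 0.
Proof.
  intros HD H1 H2 H3 H4 H5 H6.
  assert (E : conic c1 c2 c3 c4 c5 c6 1 1 1 * ((t-r)*(2*t*r+t+r-4)) =
    -(r-1)^2*(conic c1 c2 c3 c4 c5 c6 t 1 1 + conic c1 c2 c3 c4 c5 c6 1 t 1 + conic c1 c2 c3 c4 c5 c6 1 1 t)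
    + (t-1)^2*(conic c1 c2 c3 c4 c5 c6 r 1 1 + conic c1 c2 c3 c4 c5 c6 1 r 1 + conic c1 c2 c3 c4 c5 c6 1 1 r))
    by (unfold conic; ring).
  rewrite H1, H2, H3, H4, H5, H6 in E.
  match type of E with _ = ?R => replace R with 0 in E by ring end.
  apply Rmult_integral in E. destruct E as [E|E]; [exact E|].
  exfalso. apply HD. rewrite E. ring.
Qed.

Lemma linA q t : t + 2 <> 0 ->
  hh q t 1 1 = 0 -> hh q 1 t 1 = 0 -> hh q 1 1 t = 0 -> hh q 1 1 1 = 0.
Proof.
  intros HD H1 H2 H3.
  assert (E : hh q 1 1 1 * (t+2) = hh q t 1 1 + hh q 1 t 1 + hh q 1 1 t) by (unfold hh; ring).
  rewrite H1, H2, H3 in E.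
  match type of E with _ = ?R => replace R with 0 in E by ring end.
  apply Rmult_integral in E. destruct E as [E|E]; [exact E|]. lra.
Qed.

Lemma conicB c1 c2 c3 c4 c5 c6 t u :
  (t-1)*(2*(1-u^2)*((2*t+1)*(1-u)^2-u*t*(t-4))) <> 0 ->
  conic c1 c2 c3 c4 c5 c6 t 1 1 = 0 -> conic c1 c2 c3 c4 c5 c6 1 t 1 = 0 ->
  conic c1 c2 c3 c4 c5 c6 1 1 t = 0 -> conic c1 c2 c3 c4 c5 c6 1 u 0 = 0 ->
  conic c1 c2 c3 c4 c5 c6 1 0 u = 0 -> conic c1 c2 c3 c4 c5 c6 u 1 0 = 0 ->
  conic c1 c2 c3 c4 c5 c6 u 0 1 = 0 ->
  c1 = 0.
Proof.
  intros HD H1 H2 H3 H4 H5 H6 H7.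
  assert (E : c1 * ((t-1)*(2*(1-u^2)*((2*t+1)*(1-u)^2-u*t*(t-4)))) =
    (u*(u*u-1))*(2*t*conic c1 c2 c3 c4 c5 c6 t 1 1 - (conic c1 c2 c3 c4 c5 c6 1 t 1 + conic c1 c2 c3 c4 c5 c6 1 1 t))
    + (t-1)*(((t-1)*u+2*t+1)*(conic c1 c2 c3 c4 c5 c6 1 u 0 + conic c1 c2 c3 c4 c5 c6 1 0 u)
             + (-(t-1)*u-(2*t+1)*u*u)*(conic c1 c2 c3 c4 c5 c6 u 1 0 + conic c1 c2 c3 c4 c5 c6 u 0 1)))
    by (unfold conic; ring).
  rewrite H1, H2, H3, H4, H5, H6, H7 in E.
  match type of E with _ = ?R => replace R with 0 in E by ring end.
  apply Rmult_integral in E. destruct E as [E|E]; [exact E|].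
  exfalso. apply HD. rewrite E. ring.
Qed.

Definition rA t u := ((t+2)*(7-t) - u)/((5*t+1)*(t+2)).

Lemma eA_t1 t u : 0 < t -> 0 < u -> eA t u t 1 1 = 0.
Proof. intros. unfold eA, s0, s1, s2, s3, s4, Sn, Tmn, Smn, Uabc, pA1, pA2, pA3, pA4.
  field. split; [lra|]. split; lra. Qed.
Lemma eA_r1 t u : 0 < t -> 0 < u -> eA t u (rA t u) 1 1 = 0.
Proof. intros. unfold rA, eA, s0, s1, s2, s3, s4, Sn, Tmn, Smn, Uabc, pA1, pA2, pA3, pA4.
  field. split; [lra|]. split; lra. Qed.
Ltac fA := intros; unfold rA, eA, s0, s1, s2, s3, s4, Sn, Tmn, Smn, Uabc, pA1, pA2, pA3, pA4;
  field; repeat split; lra.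
Lemma eA_1t t u : 0 < t -> 0 < u -> eA t u 1 t 1 = 0. Proof. fA. Qed.
Lemma eA_11t t u : 0 < t -> 0 < u -> eA t u 1 1 t = 0. Proof. fA. Qed.
Lemma eA_1r t u : 0 < t -> 0 < u -> eA t u 1 (rA t u) 1 = 0. Proof. fA. Qed.
Lemma eA_11r t u : 0 < t -> 0 < u -> eA t u 1 1 (rA t u) = 0. Proof. fA. Qed.
Lemma eA_111 t u : 0 < t -> 0 < u -> eA t u 1 1 1 = 3 * pA4 t u.
Proof. intros; unfold eA, s0, s1, s2, s3, s4, Sn, Tmn, Smn, Uabc; ring. Qed.

Ltac fB := intros; unfold eB, omega, s0, s1, s2, s3, s4, Sn, Tmn, Smn, Uabc, pB1, pB2, pB3, pB4;
  field; repeat split; nra.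
Lemma eB_t11 t u : 0 < t -> 0 < u -> eB t u t 1 1 = 0. Proof. fB. Qed.
Lemma eB_1t1 t u : 0 < t -> 0 < u -> eB t u 1 t 1 = 0. Proof. fB. Qed.
Lemma eB_11t t u : 0 < t -> 0 < u -> eB t u 1 1 t = 0. Proof. fB. Qed.
Lemma eB_1u0 t u : 0 < t -> 0 < u -> eB t u 1 u 0 = 0. Proof. fB. Qed.
Lemma eB_10u t u : 0 < t -> 0 < u -> eB t u 1 0 u = 0. Proof. fB. Qed.
Lemma eB_u10 t u : 0 < t -> 0 < u -> eB t u u 1 0 = 0. Proof. fB. Qed.
Lemma eB_u01 t u : 0 < t -> 0 < u -> eB t u u 0 1 = 0. Proof. fB. Qed.
Lemma eB_100 t u : eB t u 1 0 0 = 1.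
Proof. unfold eB, s0, s1, s2, s3, s4, Sn, Tmn, Smn, Uabc; ring. Qed.

Lemma muB_pos t : 2 < t -> 0 < muB t.
Proof.
  intros Ht.
  assert (Hs : t <= sqrt ((t-1)*(t+2))).
  { apply Rle_trans with (sqrt (t^2)); [rewrite sqrt_pow2; lra | apply sqrt_le_1_alt; nra]. }
  assert (HR : 2 <= muR t) by (unfold muR; nra).
  unfold muB. set (R0 := muR t) in *.
  assert (H0 : 0 <= R0^2 - 4) by nra.
  pose proof (sqrt_pos (R0^2-4)).
  assert (Hq : (sqrt (R0^2-4))^2 = R0^2-4) by (rewrite <- Rsqr_pow2; apply Rsqr_sqrt; auto).
  assert (sqrt (R0^2-4) < R0) by nra.
  lra.
Qed.

Lemma partA t u : 0 < t -> t < 7 -> t <> 1 -> 0 < u -> u < muA t ->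
     u <> 3*(t-1)^2*(t+2)/(2*t+1) ->
     ~ in_Sigma_3_10 (fun a b c => eA t u (a^2) (b^2) (c^2)).
Proof.
  intros Ht0 Ht7 Ht1 Hu HuA Hu3 [qs Hqs].
  assert (HF : forall a b c, eA t u (a^2) (b^2) (c^2) = SQ qs a b c) by (intros; exact (Hqs a b c)).
  assert (HuH : u < muH t) by (pose proof (Rmin_r (muL t) (muH t)); unfold muA in HuA; lra).
  assert (HuL : u < muL t) by (pose proof (Rmin_l (muL t) (muH t)); unfold muA in HuA; lra).
  unfold muH in HuH. unfold muL in HuL.
  set (r := rA t u).
  assert (HK : 0 < (5*t+1)*(t+2)) by nra.
  assert (Hr : 0 < r) by (unfold r, rA; apply Rdiv_lt_0_compat; lra).
  assert (HD : (t-r)*(2*t*r+t+r-4) <> 0).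
  { assert (E : (t-r)*(2*t*r+t+r-4) =
       (((t+2)*(5*t+7)*(t-1)+u) * (3*(t-1)^2*(t+2) - (2*t+1)*u)) / ((5*t+1)*(t+2))^2)
      by (unfold r, rA; field; lra).
    rewrite E. apply Rmult_integral_contrapositive_currified.
    - apply Rmult_integral_contrapositive_currified.
      + destruct (Rlt_or_le t 1).
        * assert (9*(1-t) <= (t+2)*(5*t+7)) by nra. nra.
        * assert (1 < t) by lra. nra.
      + intro E2. apply Hu3. assert (E3 : 3*(t-1)^2*(t+2) = (2*t+1)*u) by lra. rewrite E3. field. lra.
    - apply Rinv_neq_0_compat. apply pow_nonzero. lra. }
  assert (Hp4 : 0 < pA4 t u).
  { assert (P : 0 < (t-1)*(6*t^2+6*t-12+u)).
    { destruct (Rlt_or_le t 1).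
      - assert (6*t^2+6*t-12+u < 0) by nra. nra.
      - assert (1 < t) by lra. nra. }
    unfold pA4. replace ((t-1)^3*(6*t^2+6*t-12+u)^3) with (((t-1)*(6*t^2+6*t-12+u))^3) by ring.
    apply Rdiv_lt_0_compat; [apply pow_lt; exact P|].
    apply Rmult_lt_0_compat; [apply Rmult_lt_0_compat; [apply pow_lt; lra|]|]; [apply pow_lt; lra| nra]. }
  assert (Z : forall q, In q qs -> quintic q 1 1 1 = 0).
  { intros q Hin.
    pose proof (point_zero (eA t u) qs HF t 1 1 q Hin ltac:(lra) ltac:(lra) ltac:(lra) (eA_t1 t u Ht0 Hu)) as P1.
    pose proof (point_zero (eA t u) qs HF 1 t 1 q Hin ltac:(lra) ltac:(lra) ltac:(lra) (eA_1t t u Ht0 Hu)) as P2.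
    pose proof (point_zero (eA t u) qs HF 1 1 t q Hin ltac:(lra) ltac:(lra) ltac:(lra) (eA_11t t u Ht0 Hu)) as P3.
    pose proof (point_zero (eA t u) qs HF r 1 1 q Hin ltac:(lra) ltac:(lra) ltac:(lra) (eA_r1 t u Ht0 Hu)) as P4.
    pose proof (point_zero (eA t u) qs HF 1 r 1 q Hin ltac:(lra) ltac:(lra) ltac:(lra) (eA_1r t u Ht0 Hu)) as P5.
    pose proof (point_zero (eA t u) qs HF 1 1 r q Hin ltac:(lra) ltac:(lra) ltac:(lra) (eA_11r t u Ht0 Hu)) as P6.
    assert (O : 0 < 1) by lra.
    destruct P1 as (A1 & B1 & C1 & D1). destruct P2 as (A2 & B2 & C2 & D2).
    destruct P3 as (A3 & B3 & C3 & D3). destruct P4 as (A4 & B4 & C4 & D4).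
    destruct P5 as (A5 & B5 & C5 & D5). destruct P6 as (A6 & B6 & C6 & D6).
    rewrite decomp. replace (1^2) with 1 by ring.
    assert (G1 : g1 q 1 1 1 = 0).
    { rewrite g1_conic. apply (conicA _ _ _ _ _ _ t r HD); rewrite <- g1_conic; auto. }
    assert (G2 : g2 q 1 1 1 = 0).
    { rewrite g2_conic. apply (conicA _ _ _ _ _ _ t r HD); rewrite <- g2_conic; auto. }
    assert (G3 : g3 q 1 1 1 = 0).
    { rewrite g3_conic. apply (conicA _ _ _ _ _ _ t r HD); rewrite <- g3_conic; auto. }
    assert (H4 : hh q 1 1 1 = 0) by (apply (linA q t); [lra|auto|auto|auto]).
    rewrite G1, G2, G3, H4. ring. }
  pose proof (SQ_zero' qs 1 1 1 Z) as S. rewrite <- HF in S.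
  replace (1^2) with 1 in S by ring. rewrite eA_111 in S by lra. lra.
Qed.

Lemma partB t u : 2 < t -> muB t < u -> u < 1 -> bB1 t (omega u) <> 0 ->
     ~ in_Sigma_3_10 (fun a b c => eB t u (a^2) (b^2) (c^2)).
Proof.
  intros Ht HuB Hu1 Hb [qs Hqs].
  assert (HF : forall a b c, eB t u (a^2) (b^2) (c^2) = SQ qs a b c) by (intros; exact (Hqs a b c)).
  pose proof (muB_pos t Ht). assert (Hu : 0 < u) by lra. assert (Ht0 : 0 < t) by lra.
  assert (HD : (t-1)*(2*(1-u^2)*((2*t+1)*(1-u)^2-u*t*(t-4))) <> 0).
  { assert (E : (2*t+1)*(1-u)^2-u*t*(t-4) = u * bB1 t (omega u))
      by (unfold bB1, omega; field; lra).
    rewrite E. apply Rmult_integral_contrapositive_currified; [lra|].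
    apply Rmult_integral_contrapositive_currified; [|apply Rmult_integral_contrapositive_currified; [lra|exact Hb]].
    apply Rmult_integral_contrapositive_currified; [lra|]. nra. }
  assert (Z : forall q, In q qs -> quintic q 1 0 0 = 0).
  { intros q Hin.
    pose proof (point_zero (eB t u) qs HF t 1 1 q Hin ltac:(lra) ltac:(lra) ltac:(lra) (eB_t11 t u Ht0 Hu)) as P1.
    pose proof (point_zero (eB t u) qs HF 1 t 1 q Hin ltac:(lra) ltac:(lra) ltac:(lra) (eB_1t1 t u Ht0 Hu)) as P2.
    pose proof (point_zero (eB t u) qs HF 1 1 t q Hin ltac:(lra) ltac:(lra) ltac:(lra) (eB_11t t u Ht0 Hu)) as P3.
    pose proof (point_zero (eB t u) qs HF 1 u 0 q Hin ltac:(lra) ltac:(lra) ltac:(lra) (eB_1u0 t u Ht0 Hu)) as P4.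
    pose proof (point_zero (eB t u) qs HF 1 0 u q Hin ltac:(lra) ltac:(lra) ltac:(lra) (eB_10u t u Ht0 Hu)) as P5.
    pose proof (point_zero (eB t u) qs HF u 1 0 q Hin ltac:(lra) ltac:(lra) ltac:(lra) (eB_u10 t u Ht0 Hu)) as P6.
    pose proof (point_zero (eB t u) qs HF u 0 1 q Hin ltac:(lra) ltac:(lra) ltac:(lra) (eB_u01 t u Ht0 Hu)) as P7.
    destruct P1 as (A1 & _). destruct P2 as (A2 & _). destruct P3 as (A3 & _).
    destruct P4 as (A4 & _). destruct P5 as (A5 & _). destruct P6 as (A6 & _). destruct P7 as (A7 & _).
    assert (C : q 5%nat 0%nat = 0).
    { apply (conicB (q 5%nat 0%nat) (q 1%nat 4%nat) (q 1%nat 0%nat) (q 3%nat 2%nat) (q 1%nat 2%nat) (q 3%nat 0%nat) t u HD); rewrite <- g1_conic;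
        [apply A1|apply A2|apply A3|apply A4|apply A5|apply A6|apply A7]; lra. }
    rewrite decomp. unfold g1, g2, g3, hh. rewrite C. ring. }
  pose proof (SQ_zero' qs 1 0 0 Z) as S. rewrite <- HF in S.
  replace (1^2) with 1 in S by ring. replace (0^2) with 0 in S by ring. rewrite eB_100 in S. lra.
Qed.

Theorem theorem4p26 :
  (forall t u : R,
     0 < t -> t < 7 -> t <> 1 -> 0 < u -> u < muA t ->
     u <> 3*(t-1)^2*(t+2)/(2*t+1) ->
     ~ in_Sigma_3_10 (fun a b c => eA t u (a^2) (b^2) (c^2)))
  /\
  (forall t u : R,
     2 < t -> muB t < u -> u < 1 -> bB1 t (omega u) <> 0 ->
     ~ in_Sigma_3_10 (fun a b c => eB t u (a^2) (b^2) (c^2))).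
Proof. split; [exact partA | exact partB]. Qed.
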